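(* For every forest $F$, the support of $\mathcal{M}_f(\cdot;F)$ is $A(F)$. Moreover, list the elements of $A=A(F)$ as $a_1,\dots,a_k$ in increasing order of progeny (so $a_k=r_1$). Then: (a) if $k=1$, $\mathcal{M}_f(r_1;F)=\frac12$; (b) if $k\ge2$, then $\mathcal{M}_f(a_i;F)=\frac12\log_2\frac{P(a_i)}{P(a_{i-1})}$ for all $1<i\le k$, and $\frac12\log_2\frac{2P(a_1)}{P^*}\le\mathcal{M}_f(a_1;F)\le\frac12$.
   Context: Let $N$ be a finite, totally ordered set of vertices. A directed forest on $N$ is a directed acyclic graph on $N$ with every out-degree at most $1$. For a forest $F$: roots are vertices with no out-edge; $T(x;F)$ is the subtree rooted at $x$ (vertices with a directed path to $x$, including $x$); $P(x)=P(x;F)=|T(x;F)|$; $P^*=\max_xP(x;F)$; $\underline{P}(x;F)=\max_{y\in T(x;F)\setminus\{x\}}P(y;F)$; $F_x$ is $F$ with the out-edge of $x$ removed (if any). Write $P(x)\succ P(y)$ iff $P(x)>P(y)$ or ($P(x)=P(y)$ and $x<y$); $r_1(F)$ is the root of $F$ maximal for $\succ$. $A(F)=\{x\in N:x=r_1(F_x)\}$ (this set forms a directed path in $F$ ending at $r_1$). The mechanism $\mathcal{M}_f$: on roots, $\mathcal{M}_f(r_1(F);F)=1/2$ if $|A(F)|=1$, $=\frac12\log_2\frac{P(r_1)}{\underline{P}(r_1)}$ if $|A(F)|\ge2$, and $\mathcal{M}_f(r;F)=0$ for all other roots $r$; on a non-root $x$, $\mathcal{M}_f(x;F)=\mathcal{M}_f(x;F_x)$.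 *)

(* Defs.v *)
From mathcomp Require Import all_boot.
From Stdlib Require Import Reals.
Set Implicit Arguments.
Unset Strict Implicit.
Unset Printing Implicit Defensive.

(* The finite totally ordered vertex set N is 'I_n with its natural order.
   A directed graph with out-degree <= 1 is a parent map F : 'I_n -> option 'I_n
   (F x = Some y  iff  x -> y is the out-edge of x). *)
Definition graph (n : nat) := {ffun 'I_n -> option 'I_n}.

Definition step n (F : graph n) (o : option 'I_n) : option 'I_n :=
  if o is Some v then F v else None.

(* acyclic: following out-edges from any vertex, one reaches a root within n steps *)
Definition is_forest n (F : graph n) : Prop :=
  forall x : 'I_n, iter n (step F) (Some x) = None.

(* y is in T(x;F): there is a directed path (of length k <= n) from y to x *)
Definition inT n (F : graph n) (x y : 'I_n) : bool :=
  [exists k : 'I_n.+1, iter k (step F) (Some y) == Some x].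

Definition P n (F : graph n) (x : 'I_n) : nat := #|[set y | inT F x y]|.

Definition Pstar n (F : graph n) : nat := \max_(x : 'I_n) P F x.

(* underline P(x;F) = max over y in T(x;F)\{x} of P(y;F)  (0 if that set is empty) *)
Definition Pbar n (F : graph n) (x : 'I_n) : nat :=
  \max_(y : 'I_n | inT F x y && (y != x)) P F y.

Definition remove n (F : graph n) (x : 'I_n) : graph n :=
  [ffun y => if y == x then None else F y].

Definition is_root n (F : graph n) (x : 'I_n) : bool := F x == None.

Definition succ_pref n (F : graph n) (x y : 'I_n) : bool :=
  (P F y < P F x) || ((P F x == P F y) && (x < y)).

(* r_1(F): the root maximal for the order above (None only when N is empty) *)
Definition r1 n (F : graph n) : option 'I_n :=
  [pick r | is_root F r && [forall s, (is_root F s && (s != r)) ==> succ_pref F r s]].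

Definition Aset n (F : graph n) : {set 'I_n} := [set x | r1 (remove F x) == Some x].

Definition log2 (t : R) : R := (ln t / ln 2)%R.

Definition M_root n (G : graph n) (r : 'I_n) : R :=
  if r1 G == Some r then
    (if #|Aset G| == 1 then (/2)%R
     else (/2 * log2 (INR (P G r) / INR (Pbar G r)))%R)
  else 0%R.

(* M_f(x;F): for roots, M_root; for non-roots, M_f(x;F_x) where x is a root of F_x.
   Since F_x = F when x is a root, uniformly M_f(x;F) = M_root F_x x. *)
Definition Mf n (F : graph n) (x : 'I_n) : R := M_root (remove F x) x.

(* Main.v *)
Require Import Defs.
From mathcomp Require Import all_boot.
From mathcomp Require Import zify.
From Stdlib Require Import Reals Lra.

Set Implicit Arguments.
Unset Strict Implicit.
Section G.
Variable n : nat.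
Implicit Types (G : graph n) (x y z t d : 'I_n).

Definition it G k z := iter k (step G) (Some z).

Lemma iter_None G k : iter k (step G) None = None.
Proof. by elim: k => //= k ->. Qed.

Lemma itD G j k z : it G (j + k) z = iter j (step G) (it G k z).
Proof. by rewrite /it iterD. Qed.

Lemma it_big G (HG : is_forest G) k z : n <= k -> it G k z = None.
Proof.
move=> h; rewrite -(subnK h) itD.
by rewrite /it HG iter_None.
Qed.

Lemma inTP G (HG : is_forest G) x z :
  reflect (exists k, it G k z = Some x) (inT G x z).
Proof.
apply: (iffP existsP) => [[k /eqP h]|[k h]]; first by exists k.
have kn : k < n.+1.
  by rewrite ltnNge; apply/negP => /ltnW hk; move: h; rewrite (it_big HG z hk).
by exists (Ordinal kn); apply/eqP.
Qed.

Lemma cycle_free G (HG : is_forest G) x k : 0 < k -> it G k x = Some x -> False.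
Proof.
move=> k0 h.
have hm : forall m, it G (m * k) x = Some x.
  elim=> [|m IH] //. by rewrite mulSn itD IH -/(it G k x) h.
have : it G (n * k) x = None by apply: it_big => //; rewrite leq_pmulr.
by rewrite hm.
Qed.

Lemma it_uniq G (HG : is_forest G) z x i j :
  it G i z = Some x -> it G j z = Some x -> i = j.
Proof.
wlog ij : i j / i <= j.
  move=> W hi hj. case: (leqP i j) => h; first exact: W.
  by symmetry; apply: W => //; apply: ltnW.
move=> hi hj; apply/eqP; rewrite eqn_leq ij /= leqNgt; apply/negP => lt.
apply: (cycle_free HG (x := x) (k := j - i)); first by rewrite subn_gt0.
by move: hj; rewrite -{1}(subnK (ltnW lt)) itD hi.
Qed.

Lemma inT_refl G x : inT G x x.
Proof. apply/existsP; exists ord0; by rewrite /=. Qed.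

Lemma inT_trans G (HG : is_forest G) x y z : inT G x y -> inT G y z -> inT G x z.
Proof.
move=> /(inTP HG) [a ha] /(inTP HG) [b hb]; apply/(inTP HG); exists (a + b).
by rewrite itD hb.
Qed.

Lemma inT_antisym G (HG : is_forest G) x y : inT G x y -> inT G y x -> x = y.
Proof.
move=> /(inTP HG) [a ha] /(inTP HG) [b hb].
have h : it G (a + b) x = Some x by rewrite itD hb.
case: (posnP (a + b)) => h0; last by exfalso; exact: (cycle_free HG h0 h).
have a0 : a = 0 by lia.
by move: ha; rewrite a0 => -[].
Qed.

Lemma inT_comp G (HG : is_forest G) x y z :
  inT G x z -> inT G y z -> inT G x y \/ inT G y x.
Proof.
move=> /(inTP HG) [a ha] /(inTP HG) [b hb].
case: (leqP a b) => h.
- right; apply/(inTP HG); exists (b - a). by move: hb; rewrite -{1}(subnK h) itD ha.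
- left; apply/(inTP HG); exists (a - b). by move: ha; rewrite -{1}(subnK (ltnW h)) itD hb.
Qed.

Lemma root_desc G (HG : is_forest G) x y : G x = None -> inT G y x -> y = x.
Proof.
move=> r /(inTP HG) [[|k]]; first by case.
by rewrite /it iterSr /= r iter_None.
Qed.

Lemma roots_eq G (HG : is_forest G) t r z : G t = None -> G r = None ->
  inT G t z -> inT G r z -> t = r.
Proof.
move=> ht hr a b; case: (inT_comp HG a b) => h.
- by apply: (root_desc HG hr h).
- by symmetry; apply: (root_desc HG ht h).
Qed.

Lemma root_exists G (HG : is_forest G) z : exists r, G r = None /\ inT G r z.
Proof.
suff : forall k, it G k z = None -> exists r, G r = None /\ inT G r z.
  by apply; apply: HG.
elim=> [|k IH] //. rewrite /it iterS -/(it G k z).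
case e: (it G k z) => [w|] /= h; last exact: IH.
by exists w; split => //; apply/(inTP HG); exists k.
Qed.

Lemma inT_parent G (HG : is_forest G) x z : inT G x z -> z != x ->
  exists p, G z = Some p /\ inT G x p.
Proof.
move=> /(inTP HG) [[|k]]; first by move=> [->]; rewrite eqxx.
rewrite /it iterSr /=. case: (G z) => [p|]; last by rewrite iter_None.
by move=> h _; exists p; split => //; apply/(inTP HG); exists k.
Qed.

Lemma P_gt0 G x : 0 < P G x.
Proof. by apply/card_gt0P; exists x; rewrite inE inT_refl. Qed.

Lemma P_sub G (HG : is_forest G) x y : inT G x y -> P G y <= P G x.
Proof.
move=> h; apply: subset_leq_card; apply/subsetP => z; rewrite !inE => h2.
exact: inT_trans h h2.
Qed.

Lemma P_lt G (HG : is_forest G) x y : inT G x y -> y != x -> P G y < P G x.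
Proof.
move=> h ne; apply: proper_card; apply/properP; split.
  apply/subsetP => z; rewrite !inE => h2. exact: inT_trans h h2.
exists x; rewrite !inE ?inT_refl //. apply/negP => h2.
by move: ne; rewrite (inT_antisym HG h h2) eqxx.
Qed.

End G.

Section R.
Variable n : nat.
Implicit Types (G : graph n) (x y z t d : 'I_n).

Lemma removeE G y w : remove G y w = if w == y then None else G w.
Proof. by rewrite /remove ffunE. Qed.

Lemma rem_fwd G y k z x : it (remove G y) k z = Some x ->
  it G k z = Some x /\ forall j, j < k -> it G j z <> Some y.
Proof.
elim: k x => [|k IH] x.
  by move=> h; split => // j.
rewrite /it iterS -/(it _ k z).
case e: (it (remove G y) k z) => [w|] //=.
rewrite removeE; case: eqP => // wy gw.
have [h1 h2] := IH _ e.
split; first by rewrite /it /= -/(it G k z) h1 /=.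
move=> j; rewrite ltnS leq_eqVlt => /orP [/eqP ->|/h2 //].
by move: h1; rewrite /it => -> -[].
Qed.

Lemma rem_bwd G y k z : (forall j, j < k -> it G j z <> Some y) ->
  it (remove G y) k z = it G k z.
Proof.
elim: k => [|k IH] h //.
rewrite /it !iterS -/(it _ k z) -/(it G k z) IH; last by move=> j jk; apply: h; apply: ltnW.
case e: (it G k z) => [w|] //=.
rewrite removeE; case: eqP => // wy.
by exfalso; apply: (h k) => //; rewrite e wy.
Qed.

Lemma rem_forest G y : is_forest G -> is_forest (remove G y).
Proof.
move=> HG x; case e: (it (remove G y) n x) => [w|] //.
by have [h _] := rem_fwd e; move: h; rewrite /it HG.
Qed.

Lemma rem_inT G (HG : is_forest G) y x z :
  inT (remove G y) x z = inT G x z && ~~ [&& inT G y z, inT G x y & y != x].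
Proof.
have HR := rem_forest y HG.
apply/idP/idP.
- move=> /(inTP HR) [k /rem_fwd [h1 h2]].
  apply/andP; split; first by apply/(inTP HG); exists k.
  apply/negP => /and3P [/(inTP HG) [a ha] /(inTP HG) [b hb] ne].
  have e : it G (b + a) z = Some x by rewrite itD ha.
  have bk := it_uniq HG e h1.
  apply: (h2 a) => //. rewrite -bk -{1}(add0n a) ltn_add2r lt0n.
  apply/negP => /eqP b0; move: hb; rewrite b0 => -[] e2.
  by move: ne; rewrite e2 eqxx.
- move=> /andP [/(inTP HG) [k hk] hn]; apply/(inTP HR); exists k.
  rewrite rem_bwd // => j jk hj; apply/negP: hn; rewrite negbK.
  apply/and3P; split; first by apply/(inTP HG); exists j.
  + apply/(inTP HG); exists (k - j). by move: hk; rewrite -{1}(subnK (ltnW jk)) itD hj.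
  + apply/negP => /eqP yx. rewrite yx in hj.
    by have := it_uniq HG hj hk; move=> e; move: jk; rewrite e ltnn.
Qed.

Lemma rem_inT_sub G (HG : is_forest G) y x z : inT (remove G y) x z -> inT G x z.
Proof. by rewrite rem_inT // => /andP []. Qed.

Lemma rem_P G (HG : is_forest G) y x :
  P (remove G y) x = if inT G x y && (y != x) then P G x - P G y else P G x.
Proof.
rewrite /P. case: ifP => h.
- have -> : [set z | inT (remove G y) x z] = [set z | inT G x z] :\: [set z | inT G y z].
    apply/setP => z; rewrite !inE rem_inT // h andbT andbC. done.
  have sub : [set z | inT G y z] \subset [set z | inT G x z].
    apply/subsetP => z; rewrite !inE => hz.
    by move/andP: h => [h _]; apply: inT_trans h hz.
  by rewrite cardsD (setIidPr sub).
- apply: eq_card => z; rewrite !inE rem_inT //.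
  case: (inT G x z) => //=. apply/negP => /and3P [_ a b]; by rewrite a b in h.
Qed.

Lemma rem_P_le G (HG : is_forest G) y x : P (remove G y) x <= P G x.
Proof.
apply: subset_leq_card; apply/subsetP => z; rewrite !inE; exact: rem_inT_sub.
Qed.

Lemma rem_P_self G (HG : is_forest G) x : P (remove G x) x = P G x.
Proof. by rewrite rem_P // eqxx andbF. Qed.

Lemma rem_P_notdesc G (HG : is_forest G) y x : ~~ inT G x y -> P (remove G y) x = P G x.
Proof. by move=> h; rewrite rem_P // (negbTE h). Qed.

Lemma rem_P_desc G (HG : is_forest G) y x : inT G y x -> P (remove G y) x = P G x.
Proof.
move=> h; rewrite rem_P //; case: ifP => // /andP [a b].
by move: b; rewrite (inT_antisym HG a h) eqxx.
Qed.

Lemma rem_Pbar G (HG : is_forest G) x : Pbar (remove G x) x = Pbar G x.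
Proof.
rewrite /Pbar; apply: eq_big => y.
  by rewrite rem_inT // eqxx !andbF andbT.
move=> /andP [h _]; apply: rem_P_desc => //; by move: h; rewrite rem_inT // => /andP [].
Qed.

Lemma remC G x y : remove (remove G x) y = remove (remove G y) x.
Proof. by apply/ffunP => z; rewrite !removeE; case: (z == y); case: (z == x). Qed.

Lemma rem_root G x : G x = None -> remove G x = G.
Proof. by move=> h; apply/ffunP => z; rewrite removeE; case: eqP => // ->. Qed.

Lemma rem_rem G x : remove (remove G x) x = remove G x.
Proof. by apply: rem_root; rewrite removeE eqxx. Qed.

Lemma is_root_rem G y s : is_root (remove G y) s = (s == y) || is_root G s.
Proof. by rewrite /is_root removeE; case: (s == y). Qed.

End R.

Definition sp (p1 i1 p2 i2 : nat) : Prop := p2 < p1 \/ (p1 = p2 /\ i1 < i2).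

Section S.
Variable n : nat.
Implicit Types (G : graph n) (x y z t d r s : 'I_n).

Lemma succ_prefE G x y : succ_pref G x y <-> sp (P G x) x (P G y) y.
Proof.
rewrite /succ_pref /sp; split.
- by case/orP => [->|/andP [/eqP -> ->]]; [left|right].
- by case=> [->|[-> ->]] //; rewrite eqxx orbT.
Qed.

Lemma sp_asym p1 i1 p2 i2 : sp p1 i1 p2 i2 -> sp p2 i2 p1 i1 -> False.
Proof. rewrite /sp; lia. Qed.

Lemma sp_total p1 (i1 : 'I_n) p2 (i2 : 'I_n) : i1 != i2 -> sp p1 i1 p2 i2 \/ sp p2 i2 p1 i1.
Proof. move=> ne. have : (i1 : nat) != i2 by []. move/eqP. rewrite /sp; lia. Qed.

Definition key G x := P G x * n.+1 + (n - x).

Lemma sp_key G x y : sp (P G x) x (P G y) y -> key G y < key G x.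
Proof.
rewrite /key /sp => h.
have xn := ltn_ord x. have yn := ltn_ord y.
case: h => [h|[e h]].
- have : (P G y).+1 * n.+1 <= P G x * n.+1 by rewrite leq_mul2r h orbT.
  lia.
- rewrite e. lia.
Qed.

Lemma r1P G r : r1 G = Some r <->
  (is_root G r /\ forall s, is_root G s -> s != r -> succ_pref G r s).
Proof.
rewrite /r1; case: pickP => [r' /andP [hr' /forallP H]|H].
- split.
  + move=> [<-]; split => // s hs ne; by move: (H s); rewrite hs ne.
  + move=> [hr Hr]; case: (eqVneq r' r) => [-> //|ne]; exfalso.
    have h1 : succ_pref G r r' by apply: Hr => //.
    have h2 : succ_pref G r' r by move: (H r); rewrite hr eq_sym ne.
    by move/succ_prefE: h1; move/succ_prefE: h2; apply: sp_asym.
- split => // -[hr Hr]; exfalso; move: (H r); rewrite /= hr /= => /negbT/negP; apply.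
  apply/forallP => s; apply/implyP => /andP [a b]; exact: Hr.
Qed.

Lemma r1_exists G : (exists r0, is_root G r0) -> exists r, r1 G = Some r.
Proof.
move=> [r0 h0].
case: (arg_maxnP (key G) h0) => r hr Hr.
exists r; apply/r1P; split => // s hs ne.
apply/succ_prefE.
case: (sp_total (P G r) (P G s) (i1 := r) (i2 := s)); first by rewrite eq_sym.
  by [].
move=> /sp_key h; move: (Hr s hs) => /= hle; by move: h; rewrite ltnNge hle.
Qed.

End S.

Section A.
Variable n : nat.
Implicit Types (G : graph n) (x y z t d r s : 'I_n).

Lemma inA G x : (x \in Aset G) = (r1 (remove G x) == Some x).
Proof. by rewrite inE. Qed.

Lemma A_rootin G r : r1 G = Some r -> r \in Aset G.
Proof.
move=> h; have [hr _] := (r1P G r).1 h.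
by rewrite inA rem_root ?h //; apply/eqP.
Qed.

Lemma beat G (HG : is_forest G) y t : y \in Aset G -> is_root (remove G y) t -> t != y ->
  sp (P G y) y (P (remove G y) t) t.
Proof.
rewrite inA => /eqP /r1P [_ H] ht ne.
by move: (H t ht ne) => /succ_prefE; rewrite rem_P_self.
Qed.

Lemma notroot G (HG : is_forest G) x y : inT G x y -> y != x -> G y <> None.
Proof. move=> h ne r; move: ne; by rewrite (root_desc HG r h) eqxx. Qed.

Lemma r1_some G (HG : is_forest G) x : exists r, r1 G = Some r.
Proof.
apply: r1_exists. have [r [hr _]] := root_exists HG x. by exists r; apply/eqP.
Qed.

Lemma A_desc G (HG : is_forest G) x y : r1 G = Some x -> y \in Aset G -> inT G x y.
Proof.
move=> hx1 hy. have [hx Hx] := (r1P G x).1 hx1.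
case: (eqVneq y x) => [->|yx]; first exact: inT_refl.
have [rho [hrho yrho]] := root_exists HG y.
case: (eqVneq rho x) => [<- //|rx].
case: (eqVneq y rho) => [e|yr].
  by move: hy; rewrite inA e rem_root // hx1 => /eqP [] /eqP; rewrite eq_sym (negbTE rx).
have ht : is_root (remove G y) x by rewrite is_root_rem hx orbT.
have := beat HG hy ht; rewrite eq_sym => /(_ yx).
rewrite (rem_P_notdesc HG); last first.
  apply/negP => h; move: rx; rewrite (roots_eq HG (z := y) _ _ h yrho) ?eqxx //; by apply/eqP.
have := Hx rho; rewrite /is_root hrho eqxx => /(_ isT rx) /succ_prefE.
have := P_lt HG yrho yr.
rewrite /sp; lia.
Qed.

Lemma A_comp G (HG : is_forest G) x y : x \in Aset G -> y \in Aset G ->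
  inT G x y \/ inT G y x.
Proof.
move=> hx hy. have [r hr] := r1_some HG x.
have rx := A_desc HG hr hx; have ry := A_desc HG hr hy.
case hxy: (inT G x y); first by left.
case hyx: (inT G y x); first by right.
exfalso.
have [hrr _] := (r1P G r).1 hr.
have xr : x != r by apply/eqP => e; move: hxy; rewrite e ry.
have yr : y != r by apply/eqP => e; move: hyx; rewrite e rx.
have bx := beat HG hx (t := r); rewrite is_root_rem hrr orbT eq_sym xr in bx.
have by_ := beat HG hy (t := r); rewrite is_root_rem hrr orbT eq_sym yr in by_.
have := bx isT isT; have := by_ isT isT.
rewrite !rem_P // rx ry xr yr /=.
have disj : [set z | inT G x z] :&: [set z | inT G y z] = set0.
  apply/setP => z; rewrite !inE; apply/negP => /andP [a b].
  by case: (inT_comp HG a b); rewrite ?hxy ?hyx.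
have cu : #|[set z | inT G x z] :|: [set z | inT G y z]| = P G x + P G y.
  by rewrite cardsU disj cards0 subn0.
have : #|[set z | inT G x z] :|: [set z | inT G y z]| < P G r.
  apply: proper_card; apply/properP; split.
    apply/subsetP => z; rewrite !inE => /orP [] h; exact: inT_trans h.
  exists r; first by rewrite inE inT_refl.
  rewrite !inE; apply/negP => /orP [] h.
  - by move: xr; rewrite (inT_antisym HG rx h) eqxx.
  - by move: yr; rewrite (inT_antisym HG ry h) eqxx.
rewrite cu /sp; lia.
Qed.

Lemma A_hered G (HG : is_forest G) x y : x \in Aset G -> y \in Aset G -> inT G x y ->
  y \in Aset (remove G x).
Proof.
move=> hx hy xy.
case: (eqVneq y x) => [->|yx]; first by rewrite inA rem_rem; rewrite inA in hx.
have HGx := rem_forest x HG.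
rewrite inA; apply/eqP/r1P; split; first by rewrite is_root_rem eqxx.
move=> t; rewrite !is_root_rem => /orP [/eqP ->|/orP [/eqP ->|ht]] ty.
- by rewrite eqxx in ty.
-
  have e1 : P (remove (remove G x) y) x = P G x - P G y.
    rewrite rem_P // rem_inT // xy inT_refl eqxx /= yx.
    by rewrite rem_P_self // rem_P_desc.
  apply/succ_prefE; rewrite e1 (rem_P_desc HGx (inT_refl _ _)) (rem_P_desc HG xy).
  have [rho [hrho xrho]] := root_exists HG x.
  have yrho := inT_trans HG xrho xy.
  have ry : rho != y.
    apply/eqP => e; subst rho. by move: yx; rewrite (inT_antisym HG xy xrho) eqxx.
  have := beat HG hy (t := rho); rewrite is_root_rem ry /is_root hrho eqxx orbT => /(_ isT isT).
  rewrite rem_P // yrho eq_sym ry /=.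
  have := P_lt HG xy yx.
  case: (eqVneq x rho) => [<- //|xr].
  have := P_lt HG xrho xr.
  rewrite /sp; lia.
-
  have := beat HG hy (t := t); rewrite is_root_rem ht orbT => /(_ isT ty) h.
  apply/succ_prefE; rewrite (rem_P_desc HGx (inT_refl _ _)) (rem_P_desc HG xy).
  have : P (remove (remove G x) y) t <= P (remove G y) t.
    by rewrite remC; apply: rem_P_le; apply: rem_forest.
  move: h; rewrite /sp; lia.
Qed.

Lemma A_anc G (HG : is_forest G) y d : y \in Aset G -> inT G d y -> d \in Aset G.
Proof.
move=> hy dy.
case: (eqVneq y d) => [<- //|yd].
have [rho [hrho drho]] := root_exists HG d.
have yrho := inT_trans HG drho dy.
have yroot : ~~ is_root G y by apply/negP => /eqP h; move: yd; rewrite (root_desc HG h dy) eqxx.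
rewrite inA; apply/eqP/r1P; split; first by rewrite is_root_rem eqxx.
move=> t; rewrite is_root_rem => /orP [/eqP -> |ht] td; first by rewrite eqxx in td.
apply/succ_prefE; rewrite rem_P_self //.
have ty : t != y by apply/eqP => e; move: yroot; rewrite -e ht.
have := beat HG hy (t := t); rewrite is_root_rem ht orbT => /(_ isT ty).
have ltyd := P_lt HG dy yd.
case: (eqVneq t rho) => [e|tr].
- subst t.
  have dr : d != rho by rewrite eq_sym.
  have yr : y != rho by apply/eqP => e; move: yroot; rewrite e /is_root hrho.
  rewrite !rem_P // drho yrho dr yr /=.
  have := P_sub HG drho.
  rewrite /sp; lia.
- have nd : ~~ inT G t d by apply/negP => h; move: tr; rewrite (roots_eq HG _ hrho h drho) ?eqxx //; apply/eqP.
  have ny : ~~ inT G t y by apply/negP => h; move: tr; rewrite (roots_eq HG _ hrho h yrho) ?eqxx //; apply/eqP.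
  rewrite !rem_P_notdesc //.
  rewrite /sp; lia.
Qed.


End A.

Section Reals.
Local Open Scope R_scope.

Lemma ln2_pos : 0 < ln 2.
Proof. rewrite -ln_1; apply: ln_increasing; lra. Qed.

Lemma log2_le u v : 0 < u -> u <= v -> log2 u <= log2 v.
Proof.
move=> hu huv; rewrite /log2 /Rdiv.
apply: Rmult_le_compat_r; first by apply: Rlt_le; apply: Rinv_0_lt_compat; apply: ln2_pos.
case: (Rle_lt_or_eq_dec _ _ huv) => h; last by rewrite h; apply: Rle_refl.
by apply: Rlt_le; apply: ln_increasing.
Qed.

Lemma log2_2 : log2 2 = 1.
Proof. rewrite /log2; have := ln2_pos; move=> h; field; lra. Qed.

Lemma log2_pos u : 1 < u -> 0 < log2 u.
Proof.
move=> h; rewrite /log2 /Rdiv; apply: Rmult_lt_0_compat.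
  rewrite -ln_1; apply: ln_increasing; lra.
apply: Rinv_0_lt_compat; apply: ln2_pos.
Qed.

Lemma INR_lt (a b : nat) : (a < b)%nat -> INR a < INR b.
Proof. by move/ltP; apply: lt_INR. Qed.
Lemma INR_le (a b : nat) : (a <= b)%nat -> INR a <= INR b.
Proof. by move/leP; apply: le_INR. Qed.

Lemma R_pos (p q : nat) : (0 < q)%nat -> (q < p)%nat -> 0 < /2 * log2 (INR p / INR q).
Proof.
move=> q0 qp. have hq := INR_lt q0. have hqp := INR_lt qp. rewrite /= in hq.
apply: Rmult_lt_0_compat; first lra.
apply: log2_pos.
apply: (Rmult_lt_reg_r (INR q)) => //.
replace (INR p / INR q * INR q) with (INR p) by (field; lra). lra.
Qed.

Lemma R_half (a S : nat) : (0 < a)%nat -> (a <= S)%nat -> /2 * log2 (2 * INR a / INR S) <= /2.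
Proof.
move=> a0 aS. have ha := INR_lt a0. have haS := INR_le aS. rewrite /= in ha.
suff : log2 (2 * INR a / INR S) <= 1 by lra.
rewrite -log2_2; apply: log2_le.
  apply: Rdiv_lt_0_compat; lra.
apply: (Rmult_le_reg_r (INR S)); first lra.
replace (2 * INR a / INR S * INR S) with (2 * INR a) by (field; lra). lra.
Qed.

Lemma R_upper (a B : nat) : (0 < a)%nat -> (0 < B)%nat -> (a <= 2 * B)%nat -> /2 * log2 (INR a / INR B) <= /2.
Proof.
move=> a0 B0 aB. have ha := INR_lt a0. have hB := INR_lt B0. have haB := INR_le aB.
rewrite mult_INR /= in haB. rewrite /= in ha hB.
suff : log2 (INR a / INR B) <= 1 by lra.
rewrite -log2_2; apply: log2_le.
  apply: Rdiv_lt_0_compat; lra.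
apply: (Rmult_le_reg_r (INR B)); first lra.
replace (INR a / INR B * INR B) with (INR a) by (field; lra). lra.
Qed.

Lemma R_lower (a B S : nat) : (0 < a)%nat -> (0 < B)%nat -> (2 * B <= S)%nat ->
  /2 * log2 (2 * INR a / INR S) <= /2 * log2 (INR a / INR B).
Proof.
move=> a0 B0 BS. have ha := INR_lt a0. have hB := INR_lt B0. have hBS := INR_le BS.
rewrite mult_INR /= in hBS. rewrite /= in ha hB.
apply: Rmult_le_compat_l; first lra.
apply: log2_le.
  apply: Rdiv_lt_0_compat; lra.
apply: (Rmult_le_reg_r (INR S * INR B)); first nra.
replace (2 * INR a / INR S * (INR S * INR B)) with (2 * INR a * INR B) by (field; lra).
replace (INR a / INR B * (INR S * INR B)) with (INR a * INR S) by (field; lra).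
nra.
Qed.

End Reals.

Section Main.
Variable n : nat.
Implicit Types (G F : graph n) (x y z t d r s : 'I_n).

Lemma A_card_ge2 G x : x \in Aset G -> #|Aset G| != 1 -> exists y, y \in Aset G /\ y != x.
Proof.
move=> hx hc. case: (pickP [pred y | (y \in Aset G) && (y != x)]) => [y /andP [a b]|H].
  by exists y.
exfalso; move/eqP: hc; apply.
have -> : Aset G = [set x].
  apply/setP => z; rewrite in_set1; move: (H z) => /= /negbT.
  case: (eqVneq z x) => [-> _|zx]; first by rewrite hx ?eqxx.
  by rewrite andbT => /negbTE.
by rewrite cards1.
Qed.

Lemma part1 F (HF : is_forest F) x : Mf F x <> 0%R <-> x \in Aset F.
Proof.
rewrite /Mf /M_root inA.
case: eqP => [h|h]; last by split => // ?; apply.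
split => // _.
case: ifP => hc; first by apply: Rgt_not_eq; apply: Rinv_0_lt_compat; apply: Rlt_0_2.
set G := remove F x.
have HG : is_forest G by apply: rem_forest.
have xA : x \in Aset G by apply: A_rootin.
have [y [yA yx]] := A_card_ge2 xA (negbT hc).
have xy : inT G x y := A_desc HG h yA.
have Py : P G y <= Pbar G x by apply: leq_bigmax_cond; rewrite xy yx.
have Pbx : Pbar G x <= (P G x).-1.
  apply/bigmax_leqP => d /andP [a b]; have := P_lt HG a b; lia.
have := P_gt0 G y; have := P_gt0 G x => h1 h2.
apply: Rgt_not_eq; apply: R_pos; lia.
Qed.

End Main.

Lemma ar1 p q i j : sp q i (p - q) j -> p <= 2 * q.
Proof. rewrite /sp; lia. Qed.
Lemma ar2 p q i j : 0 < q -> sp (p - q) i q j -> 2 * q <= p.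
Proof. rewrite /sp; lia. Qed.
Lemma ar3 a b c r i j k : sp a i b j -> sp c k a i -> 2 * c <= r -> b * 2 <= r.
Proof. rewrite /sp; lia. Qed.

Section Main2.
Variable n : nat.
Implicit Types (G F : graph n) (x y z t d r s : 'I_n).

Lemma bound_a1 F (HF : is_forest F) a1 : a1 \in Aset F ->
  (forall d, d \in Aset F -> P F a1 <= P F d) ->
  (/2 * log2 (2 * INR (P F a1) / INR (Pstar F)) <= Mf F a1 <= /2)%R.
Proof.
move=> ha1 Hmin.
set G := remove F a1.
have HG : is_forest G by apply: rem_forest.
have hG : r1 G = Some a1 by apply/eqP; rewrite -inA.
have Pst : P F a1 <= Pstar F by rewrite /Pstar; apply: (@leq_bigmax _ (fun x => P F x)).
have Pa0 := P_gt0 F a1.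
rewrite /Mf /M_root -/G hG eqxx.
case: ifP => hc.
  split; last by apply: Rle_refl.
  exact: R_half.
have a1A : a1 \in Aset G by apply: A_rootin.
have [y [yA ya]] := A_card_ge2 a1A (negbT hc).
have ayG : inT G a1 y := A_desc HG hG yA.
have ay : inT F a1 y := rem_inT_sub HF ayG.
rewrite (rem_P_self HF) (rem_Pbar HF).
have Py : P F y <= Pbar F a1 by apply: leq_bigmax_cond; rewrite ay ya.
have Py0 := P_gt0 F y.
have a1root : is_root G a1 by rewrite is_root_rem eqxx.
have up : P F a1 <= 2 * P F y.
  have := beat HG yA (t := a1); rewrite is_root_rem a1root orbT eq_sym ya => /(_ isT isT).
  rewrite (rem_P HG) ayG ya /= (rem_P_self HF) (rem_P_desc HF ay); apply: ar1.
have [rho [hrho a1rho]] := root_exists HF a1.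
have yroot : y != rho.
  apply/eqP => e; apply: (notroot HF ay ya); by rewrite e.
have dnotA : forall d, inT F a1 d -> d != a1 -> d \notin Aset F.
  move=> d h1 h2; apply/negP => /Hmin; have := P_lt HF h1 h2; by rewrite ltnNge => /negbTE ->.
have claim : forall d, inT F a1 d -> d != a1 ->
    2 * P F d <= P F rho \/ exists t, [/\ is_root F t, t != rho & sp (P F t) t (P F d) d].
  move=> d h1 h2.
  have HFd : is_forest (remove F d) by apply: rem_forest.
  have [r' hr'] := r1_some HFd d.
  have r'd : r' != d by apply/eqP => e; move: (dnotA d h1 h2); rewrite inA hr' e eqxx.
  have [hr'root Hr'] := (r1P _ _).1 hr'.
  have hd : succ_pref (remove F d) r' d by apply: Hr'; [rewrite is_root_rem eqxx | rewrite eq_sym].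
  move: hd => /succ_prefE; rewrite (rem_P_self HF).
  have r'root : is_root F r' by move: hr'root; rewrite is_root_rem (negbTE r'd).
  have drho := inT_trans HF a1rho h1.
  have dr : d != rho by apply/eqP => e; apply: (notroot HF h1 h2); rewrite e.
  case: (eqVneq r' rho) => [e|ne].
  - rewrite e (rem_P HF) drho dr /= => hsp; left.
    exact: ar2 (P_gt0 F d) hsp.
  - rewrite (rem_P_notdesc HF) => [hsp|]; first by right; exists r'.
    apply/negP => h; move: ne; rewrite (roots_eq HF (z := d) _ _ h drho) ?eqxx //; by apply/eqP.
have claim2 : forall t, is_root F t -> t != rho -> sp (P F y) y (P F t) t.
  move=> t ht tr.
  have ty : t != y by apply/eqP => e; apply: (notroot HF ay ya); apply/eqP; rewrite -e.
  have := beat HG yA (t := t); rewrite !is_root_rem ht !orbT => /(_ isT ty).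
  have nt1 : ~~ inT F t a1.
    apply/negP => h; move: tr; rewrite (roots_eq HF (z := a1) _ _ h a1rho) ?eqxx //; by apply/eqP.
  have nt2 : ~~ inT G t y.
    apply/negP => /(rem_inT_sub HF) h.
    move: tr; rewrite (roots_eq HF (z := y) _ hrho h (inT_trans HF a1rho ay)) ?eqxx //; by apply/eqP.
  by rewrite (rem_P_notdesc HG nt2) (rem_P_notdesc HF nt1) (rem_P_desc HF ay).
have y2 : 2 * P F y <= P F rho.
  case: (claim y ay ya) => // -[t [ht tr hsp]].
  by exfalso; apply: (sp_asym hsp); apply: claim2.
have rhoS : P F rho <= Pstar F by rewrite /Pstar; apply: (@leq_bigmax _ (fun x => P F x)).
have Pb2 : Pbar F a1 * 2 <= P F rho.
  rewrite -leq_divRL //; apply/bigmax_leqP => d /andP [h1 h2].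
  rewrite leq_divRL //.
  case: (claim d h1 h2) => [|[t [ht tr hsp]]]; first by rewrite mulnC.
  exact: ar3 hsp (claim2 t ht tr) y2.
split.
- apply: R_lower => //; first exact: leq_trans Py.
  rewrite mulnC; exact: leq_trans Pb2 rhoS.
- apply: R_upper => //; first exact: leq_trans Py.
  apply: leq_trans up _; by rewrite leq_mul2l Py orbT.
Qed.

End Main2.

Lemma ar4 p q d i j : sp q i (p - q) j -> d + q <= p -> d <= q.
Proof. rewrite /sp; lia. Qed.

Section Main3.
Variable n : nat.
Implicit Types (G F : graph n) (x y z t d r s : 'I_n).

Lemma disj_sum F (HF : is_forest F) r x y : ~~ inT F x y -> ~~ inT F y x ->
  inT F r x -> inT F r y -> P F x + P F y <= P F r.
Proof.
move=> nxy nyx rx ry.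
have disj : [set z | inT F x z] :&: [set z | inT F y z] = set0.
  apply/setP => z; rewrite !inE; apply/negP => /andP [a b].
  by case: (inT_comp HF a b); apply/negP.
have <- : #|[set z | inT F x z] :|: [set z | inT F y z]| = P F x + P F y.
  by rewrite cardsU disj cards0 subn0.
apply: subset_leq_card; apply/subsetP => z; rewrite !inE => /orP [] h; exact: inT_trans h.
Qed.

Lemma Pbar_eq F (HF : is_forest F) a b : a \in Aset F -> b \in Aset F ->
  inT F a b -> b != a ->
  (forall d, d \in Aset F -> P F b < P F d -> P F d < P F a -> False) ->
  Pbar F a = P F b.
Proof.
move=> aA bA ab ba Hgap.
apply/eqP; rewrite eqn_leq; apply/andP; split; last first.
  by apply: leq_bigmax_cond; rewrite ab ba.
suff key : forall d : 'I_n, inT F a d -> d != a -> P F d <= P F b.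
  by apply/bigmax_leqP => d /andP [h1 h2]; apply: key.
move=> d h1 h2.
case hdb: (inT F b d); first exact: P_sub.
case hbd: (inT F d b).
  case: (eqVneq d b) => [-> //|db].
  exfalso; apply: (Hgap d).
  - have := @A_anc n F HF b d bA. apply. by rewrite hbd.
  - by apply: P_lt => //; rewrite eq_sym.
  - exact: P_lt.
have [rho [hrho arho]] := root_exists HF a.
have brho := inT_trans HF arho ab.
have drho := inT_trans HF arho h1.
have br : b != rho by apply/eqP => e; apply: (notroot HF ab ba); rewrite e.
have := beat HF bA (t := rho); rewrite is_root_rem /is_root hrho eqxx orbT eq_sym br.
move=> /(_ isT isT); rewrite (rem_P HF) brho br /= => hsp.
apply: ar4 hsp _.
apply: disj_sum => //; by rewrite ?hdb ?hbd.
Qed.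

End Main3.

Unset Implicit Arguments.
Set Strict Implicit.

Theorem lemma1 (n : nat) (F : graph n) (HF : is_forest F) :
  (forall x : 'I_n, Mf F x <> 0%R <-> x \in Aset F) /\
  (forall s : seq 'I_n,
     uniq s -> (forall x, (x \in s) = (x \in Aset F)) ->
     sorted (fun a b => P F a <= P F b) s ->
     onth s (size s).-1 = r1 F /\
     (size s = 1 -> forall r, r1 F = Some r -> Mf F r = (/2)%R) /\
     (2 <= size s ->
        (forall (i : nat) (a b : 'I_n), 0 < i -> onth s i = Some a -> onth s i.-1 = Some b ->
           Mf F a = (/2 * log2 (INR (P F a) / INR (P F b)))%R) /\
        (forall a1 : 'I_n, onth s 0 = Some a1 ->
           (/2 * log2 (2 * INR (P F a1) / INR (Pstar F)) <= Mf F a1 <= /2)%R))).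
Proof.
split; first by move=> x; apply: part1.
move=> s Hu Hs Hsort.
have Hcard : #|Aset F| = size s.
  rewrite -(card_uniqP Hu); apply: eq_card => x; by rewrite Hs.
case: (boolP (size s == 0)) => [/eqP/size0nil Es|s0].
  subst s; split; last by split.
  case e: (r1 F) => [r|] //; have := A_rootin e; by rewrite -Hs.
have [x0 _] : exists x0 : 'I_n, x0 \in s.
  by case: s s0 {Hu Hs Hsort Hcard} => // x0 s' _; exists x0; rewrite mem_head.
have tr : transitive (fun a b : 'I_n => P F a <= P F b) by move=> b a c; apply: leq_trans.
have Hle : forall i j, i <= j -> j < size s -> P F (nth x0 s i) <= P F (nth x0 s j).
  move=> i j ij js.
  apply: (sorted_leq_nth tr (fun a => leqnn _) x0 Hsort) => //; rewrite inE //.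
  exact: leq_ltn_trans ij js.
have onthS : forall i a, onth s i = Some a -> a = nth x0 s i /\ i < size s.
  move=> i a h; split; first by rewrite (@onth_nth _ x0 _ _ _ h).
  by case: (ltnP i (size s)) => // /onth_default; rewrite h.
have onthSome : forall i, i < size s -> onth s i = Some (nth x0 s i).
  by move=> i hi; rewrite onthE (nth_map x0).
have nthA : forall i, i < size s -> nth x0 s i \in Aset F.
  by move=> i hi; rewrite -Hs mem_nth.
have Aidx : forall d, d \in Aset F -> exists j, j < size s /\ d = nth x0 s j.
  move=> d; rewrite -Hs => hd; exists (index d s); by rewrite index_mem hd nth_index.
have sz : (size s).-1 < size s by rewrite prednK ?lt0n.
split.
  have [r hr] := r1_some HF x0.
  have [j [js ej]] := Aidx r (A_rootin hr).
  rewrite hr onthSome //.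
  have lA := nthA _ sz.
  have hl := A_desc HF hr lA.
  have hle : P F r <= P F (nth x0 s (size s).-1).
    by rewrite ej; apply: Hle => //; rewrite -ltnS prednK ?lt0n.
  congr Some; apply/eqP; apply/negP => /negP ne.
  by have := P_lt HF hl ne; rewrite ltnNge hle.
split.
  move=> s1 r hr; have [hroot _] := (r1P F r).1 hr.
  rewrite /Mf /M_root rem_root; last by apply/eqP.
  by rewrite hr eqxx Hcard s1.
move=> s2; split.
- move=> i a b i0 ha hb.
  have [ea ia] := onthS _ _ ha; have [eb ib] := onthS _ _ hb.
  have aA : a \in Aset F by rewrite ea; apply: nthA.
  have bA : b \in Aset F by rewrite eb; apply: nthA.
  have ab : a != b.
    rewrite ea eb nth_uniq //; move: i0; clear; case: i => // k _.
    by rewrite gtn_eqF.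
  have Pba : P F b <= P F a by rewrite ea eb; apply: Hle => //; apply: leq_pred.
  have hab : inT F a b.
    case: (A_comp HF aA bA) => // h.
    by have := P_lt HF h ab; rewrite ltnNge Pba.
  have hra : r1 (remove F a) = Some a by apply/eqP; rewrite -inA.
  rewrite /Mf /M_root hra eqxx.
  have c2 : 1 < #|Aset (remove F a)|.
    have sub : [set a; b] \subset Aset (remove F a).
      apply/subsetP => z; rewrite in_set2 => /orP [] /eqP ->.
      + by rewrite inA rem_rem hra.
      + exact: A_hered.
    by apply: leq_trans (subset_leq_card sub); rewrite cards2 ab.
  rewrite ifN; last by rewrite neq_ltn c2 orbT.
  rewrite (rem_P_self HF) (rem_Pbar HF) (Pbar_eq HF aA bA hab) //; first by rewrite eq_sym.
  move=> d dA h1 h2.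
  have [j [js ed]] := Aidx d dA.
  case: (leqP j i.-1) => hj.
    by have := Hle j i.-1 hj ib; rewrite -ed -eb leqNgt h1.
  have : i <= j by move: hj; case: i {ia ha ea hb eb ib Pba i0} => // i.
  move=> /(Hle i j) /(_ js); by rewrite -ed -ea leqNgt h2.
- move=> a1 h.
  have [e1 i1] := onthS _ _ h.
  apply: bound_a1 => //; first by rewrite e1; apply: nthA.
  move=> d dA; have [j [js ->]] := Aidx d dA.
  by rewrite e1; apply: Hle.
Qed.
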